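(* For every non-negative integer vector ${\bf v}=(v_1,\dots,v_{n+1})$ we have $f_{\bf v}(t)\le F_{\bf v}(t)$ for all $t\ge0$, with equality for all $t\ge 0$ if ${\bf v}$ is GMS.
   Context: Binomial convention: $\binom{a}{k}=0$ if $a<k$. $f_{\bf v}(t)=\sum_{i=0}^{n}\binom{\min(t-i+1,v_{i+1})}{1}$, $F_{\bf v}(t)=\min_{0\le i\le n+1}\big(\binom{t+2}{2}-\binom{t-i+2}{2}+\sum_{j=i+1}^{n+1}v_j\big)$. A non-negative, non-increasing integer vector ${\bf v}$ is GMS if $v_i-v_j\ge j-i-1$ for all $i<j$. *)

(* Defs.v *)
From mathcomp Require Import all_boot.
Set Implicit Arguments. Unset Strict Implicit. Unset Printing Implicit Defensive.

(* A vector v = (v_1,...,v_{n+1}) of non-negative integers is encoded as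
   v : 'I_n.+1 -> nat with  v_{k+1} = v k  (0-based indexing).
   Since t >= 0 and all quantities are naturals, truncated subtraction
   realises the convention binom(a,k)=0 for a<k: a negative top argument
   a becomes 0, and 'C(0,1) = 'C(0,2) = 0. *)

Definition fv (n : nat) (v : 'I_n.+1 -> nat) (t : nat) : nat :=
  \sum_(i < n.+1) 'C(minn (t.+1 - i) (v i), 1).

Definition Fterm (n : nat) (v : 'I_n.+1 -> nat) (t i : nat) : nat :=
  'C(t.+2, 2) - 'C(t.+2 - i, 2) + \sum_(k < n.+1 | i <= k) v k.

Definition Fv (n : nat) (v : 'I_n.+1 -> nat) (t : nat) : nat :=
  foldr minn (Fterm v t 0) [seq Fterm v t i | i <- iota 0 n.+2].

Definition GMS (n : nat) (v : 'I_n.+1 -> nat) : Prop :=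
  (forall i j : 'I_n.+1, i <= j -> v j <= v i) /\
  (forall i j : 'I_n.+1, i < j -> v j + (j - i - 1) <= v i).

(* Main.v *)
From Stdlib Require Import Lia.
Require Import Defs.
From mathcomp Require Import all_boot.

Ltac nlia := try apply/leP; try apply/ltP;
  repeat match goal with
  | H : is_true (_ <= _) |- _ => move/leP: H
  | H : is_true (_ < _) |- _ => move/ltP: H
  end;
  rewrite -?plusE -?minusE -?multE; intros; lia.

Lemma S_step t i : 'C(t.+2,2) - 'C(t.+2 - i.+1, 2)
   = 'C(t.+2,2) - 'C(t.+2 - i,2) + (t.+1 - i).
Proof.
case: (leqP i t.+1) => Hi.
- have E: t.+2 - i = (t.+1 - i).+1 by rewrite subSn.
  have B: 'C((t.+1-i).+1,2) = 'C(t.+1-i,2) + (t.+1-i) by rewrite binS bin1.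
  have H: 'C((t.+1-i).+1, 2) <= 'C(t.+2,2) by apply: leq_bin2l; by rewrite ltnS leq_subr.
  rewrite E subSS B; rewrite B in H.
  move: H; move: ('C(t.+2,2)) ('C(t.+1-i,2)) => C c H. nlia.
- have ->: t.+2 - i.+1 = 0 by nlia.
  have ->: t.+2 - i = 0 by nlia.
  have ->: t.+1 - i = 0 by nlia.
  by rewrite addn0.
Qed.

Lemma sum_pref t N i : \sum_(k < N | k < i) (t.+1 - k)
   = 'C(t.+2,2) - 'C(t.+2 - minn i N, 2).
Proof.
elim: N => [|N IHN].
  by rewrite big_ord0 minn0 subn0 subnn.
rewrite big_mkcond big_ord_recr /= -big_mkcond IHN.
case: (ltnP N i) => H.
- by rewrite (minn_idPr H) S_step.
- by rewrite ?(minn_idPl (leqW H)) addn0.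
Qed.

Lemma split_sum n (g : 'I_n.+1 -> nat) (i : nat) :
  \sum_(k < n.+1) g k = \sum_(k < n.+1 | k < i) g k + \sum_(k < n.+1 | i <= k) g k.
Proof.
rewrite (bigID (fun k : 'I_n.+1 => k < i)) /=; congr (_ + _).
by apply: eq_bigl => k; rewrite -leqNgt.
Qed.

Lemma le_Fterm n (v : 'I_n.+1 -> nat) t i : i <= n.+1 -> fv v t <= Fterm v t i.
Proof.
move=> Hi.
rewrite /fv /Fterm (@split_sum _ _ i) -(minn_idPl Hi) -(sum_pref t n.+1 i).
rewrite (minn_idPl Hi).
apply: leq_add; apply: leq_sum => k _; by rewrite bin1 ?geq_minl ?geq_minr.
Qed.

Lemma foldr_lb (s : seq nat) x0 y : y <= x0 -> (forall x, x \in s -> y <= x) ->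
  y <= foldr minn x0 s.
Proof.
elim: s => [|a s IH] //= H1 H2.
rewrite leq_min H2 ?mem_head // IH // => x Hx.
by apply: H2; rewrite in_cons Hx orbT.
Qed.

Lemma foldr_ub (s : seq nat) x0 x : x \in s -> foldr minn x0 s <= x.
Proof.
elim: s => [|a s IH] //=.
rewrite in_cons; case/orP => [/eqP ->|Hx]; first exact: geq_minl.
exact: leq_trans (geq_minr _ _) (IH Hx).
Qed.

Theorem mainTheorem12 (n : nat) (v : 'I_n.+1 -> nat) :
  (forall t : nat, fv v t <= Fv v t) /\
  (GMS v -> forall t : nat, fv v t = Fv v t).
Proof.
have LB : forall t, fv v t <= Fv v t.
  move=> t; rewrite /Fv; apply: foldr_lb; first exact: le_Fterm.
  move=> x /mapP [i]; rewrite mem_iota add0n => /andP [_ Hi] ->.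
  exact: le_Fterm.
split => // [[_ G2]] t.
apply/eqP; rewrite eqn_leq LB /=.
pose pr := fun k => v (inord k) < t.+1 - k.
set i := find pr (iota 0 n.+1).
have Hi : i <= n.+1 by rewrite -(size_iota 0 n.+1) find_size.
have Hlt : forall k : 'I_n.+1, k < i -> t.+1 - k <= v k.
  move=> k Hk; have := before_find 0 Hk.
  rewrite nth_iota; last by apply: leq_trans Hk Hi.
  by rewrite add0n /pr inord_val => /negbT; rewrite -leqNgt.
have Hge : forall k : 'I_n.+1, i <= k -> v k <= t.+1 - k.
  move=> k Hk.
  have Hin : i < n.+1 by apply: leq_trans (ltn_ord k).
  have := @nth_find _ 0 pr (iota 0 n.+1).
  rewrite has_find size_iota -/i => /(_ Hin).
  rewrite nth_iota // add0n /pr => Hpi.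
  case: (ltngtP i k) => Hik.
  - have := G2 (inord i) k; rewrite inordK // => /(_ Hik) H.
    move: Hpi H; move: (v (inord i)) => a Hpi H; nlia.
  - by move: Hik; rewrite ltnNge Hk.
  - by move: Hpi; rewrite Hik inord_val => /ltnW.
have E : fv v t = Fterm v t i.
  rewrite /fv /Fterm (@split_sum _ _ i) -(minn_idPl Hi) -(sum_pref t n.+1 i).
  rewrite (minn_idPl Hi); congr (_ + _); apply: eq_bigr => k Hk; rewrite bin1.
  - exact/minn_idPl/Hlt.
  - exact/minn_idPr/Hge.
rewrite E /Fv; apply: foldr_ub; apply/mapP; exists i => //.
by rewrite mem_iota add0n.
Qed.
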